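(* Let $N$ be a simply connected nilpotent Lie group with Lie algebra $\mathfrak n$, $(\delta_t)_{t>0}$ a one-parameter group of dilations given by subspaces $(m_p)_p$, and $M$ a connected closed subgroup of $N$ with Lie algebra $\mathfrak m$. Then the subspace $\mathfrak m_\infty=\lim_{t\to+\infty}\delta_{1/t}(\mathfrak m)$ is a Lie subalgebra of the graded Lie algebra $\mathfrak n_0$.
   Context: Let $C^p(\mathfrak n)$ be the descending central series; choose subspaces $m_p$ with $C^p(\mathfrak n)=m_p\oplus C^{p+1}(\mathfrak n)$, so $\mathfrak n=\bigoplus_p m_p$, and let $\pi_p$ be the projection onto $m_p$. The dilation $\delta_t$ is the linear map acting by $t^p$ on $m_p$. The graded Lie algebra $\mathfrak n_0$ is the vector space $\mathfrak n$ with bracket defined by $[x,y]_0=\pi_{p+q}([x,y])$ for $x\in m_p$, $y\in m_q$ (extended bilinearly). The limit $\mathfrak m_\infty$ is taken in the Grassmannian of $\dim\mathfrak m$-dimensional subspaces of $\mathfrak n$; this limit exists. *)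

(* Defs.v *)
From HB Require Import structures.
From mathcomp Require Import all_boot all_order all_algebra.
From mathcomp Require Import all_classical all_reals all_analysis.
Set Implicit Arguments. Unset Strict Implicit. Unset Printing Implicit Defensive.
Import Order.TTheory GRing.Theory Num.Theory.
Local Open Scope ring_scope.
Local Open Scope classical_set_scope.
Import numFieldNormedType.Exports.

Section Nilp.
Variables (R : realType) (d : nat).
Notation V := 'rV[R]_d.

Definition is_lie_bracket (br : V -> V -> V) : Prop :=
  [/\ (forall y, linear (br ^~ y)), (forall x, linear (br x)),
      (forall x, br x x = 0) &
      (forall x y z, br x (br y z) + br y (br z x) + br z (br x y) = 0)].

Definition brsp (br : V -> V -> V) (A : 'M[R]_d) : 'M[R]_d :=
  (\sum_(i < d) \sum_(j < d) <<br (delta_mx 0 i) (row j A)>>)%MS.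

(* lcs_aux k = C^{k+1}(n) *)
Fixpoint lcs_aux (br : V -> V -> V) (k : nat) : 'M[R]_d :=
  if k is k'.+1 then brsp br (lcs_aux br k') else 1%:M.

Definition lcs br (p : nat) : 'M[R]_d := lcs_aux br p.-1.

Definition nilpotent_bracket br : Prop := exists s, lcs br s.+1 = 0.

Definition is_grading br (mg : nat -> 'M[R]_d) : Prop :=
  forall p, (0 < p)%N ->
    (lcs br p == mg p + lcs br p.+1)%MS /\ (mg p :&: lcs br p.+1)%MS = 0.

(* projection pi_p onto m_p along the other m_q (n = (+)_{1<=p<=d} m_p,
   since C^{d+1}(n) = 0 for a nilpotent Lie algebra of dimension d);
   pi_p = 0 for p outside [1, d] (where m_p = 0). *)
Definition proj_grad (mg : nat -> 'M[R]_d) (p : nat) : 'M[R]_d :=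
  if (0 < p <= d)%N then
    proj_mx (<<mg p>>)%MS (\sum_(1 <= q < d.+1 | q != p) <<mg q>>)%MS
  else 0.

Definition dilation (mg : nat -> 'M[R]_d) (t : R) : 'M[R]_d :=
  \sum_(1 <= p < d.+1) t ^+ p *: proj_grad mg p.

Definition graded_bracket br (mg : nat -> 'M[R]_d) (x y : V) : V :=
  \sum_(1 <= p < d.+1) \sum_(1 <= q < d.+1)
     br (x *m proj_grad mg p) (y *m proj_grad mg q) *m proj_grad mg (p + q).

Definition is_subalgebra (br : V -> V -> V) (A : 'M[R]_d) : Prop :=
  forall x y : V, (x <= A)%MS -> (y <= A)%MS -> (br x y <= A)%MS.

(* Convergence in the Grassmannian Gr(k, R^d) as t -> +oo: the subspaces
   (row spaces) W t converge to Winf, i.e. (locally) they admit bases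
   B t (k x d matrices) converging entrywise to a basis Binf of Winf. *)
Definition grass_lim (k : nat) (W : R -> 'M[R]_d) (Winf : 'M[R]_d) : Prop :=
  exists (B : R -> 'M[R]_(k, d)) (Binf : 'M[R]_(k, d)),
    [/\ \rank Binf = k, (Binf == Winf)%MS,
        (\forall t \near +oo, (B t == W t)%MS) &
        (forall i j, B t i j @[t --> +oo] --> Binf i j)].

End Nilp.

(* Main.v *)
Require Import Defs.
From HB Require Import structures.
From mathcomp Require Import all_boot all_order all_algebra.
From mathcomp Require Import all_classical all_reals all_analysis.
Import Order.TTheory GRing.Theory Num.Theory.
Local Open Scope ring_scope.
Import numFieldNormedType.Exports.
Local Open Scope classical_set_scope.
Set Implicit Arguments.

Section An.
Variable R : realType.

Lemma near_pos : \forall t \near +oo, (0 : R) < t.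
Proof. exact: nbhs_pinfty_gt. Qed.

Lemma inv_cvg0 : (fun t : R => t^-1) @ +oo --> (0 : R).
Proof.
apply/gtr0_cvgV0; first exact: near_pos.
exact: cvg_id.
Qed.

Lemma cvg_sumR I (r : seq I) (P : pred I) (f : I -> R -> R) (l : I -> R) :
  (forall i, P i -> f i t @[t --> +oo] --> l i) ->
  (\sum_(i <- r | P i) f i t) @[t --> +oo] --> \sum_(i <- r | P i) l i.
Proof.
move=> H; elim: r => [|i r IH].
  rewrite big_nil; under eq_cvg do rewrite big_nil; exact: cvg_cst.
rewrite big_cons; under eq_cvg do rewrite big_cons.
case: ifP => Pi //; exact: cvgD (H i Pi) IH.
Qed.

Lemma cvg_prodR I (r : seq I) (P : pred I) (f : I -> R -> R) (l : I -> R) :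
  (forall i, P i -> f i t @[t --> +oo] --> l i) ->
  (\prod_(i <- r | P i) f i t) @[t --> +oo] --> \prod_(i <- r | P i) l i.
Proof.
move=> H; elim: r => [|i r IH].
  rewrite big_nil; under eq_cvg do rewrite big_nil; exact: cvg_cst.
rewrite big_cons; under eq_cvg do rewrite big_cons.
case: ifP => Pi //; exact: cvgM (H i Pi) IH.
Qed.

Lemma cvg_exprR (f : R -> R) (l : R) k : f t @[t --> +oo] --> l ->
  (f t ^+ k) @[t --> +oo] --> l ^+ k.
Proof.
move=> H; elim: k => [|k IH].
  under eq_cvg do rewrite expr0; rewrite expr0; exact: cvg_cst.
under eq_cvg do rewrite exprS; rewrite exprS; exact: cvgM H IH.
Qed.

Definition mcvg m n (f : R -> 'M[R]_(m, n)) (L : 'M[R]_(m, n)) :=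
  forall i j, f t i j @[t --> +oo] --> L i j.
Arguments mcvg {m n}.

Lemma mcvg_cst m n (A : 'M[R]_(m, n)) : mcvg (fun=> A) A.
Proof. move=> i j; exact: cvg_cst. Qed.

Lemma mcvg_eq m n (f g : R -> 'M[R]_(m, n)) L :
  (\forall t \near +oo, f t = g t) -> mcvg g L -> mcvg f L.
Proof.
move=> E H i j; apply: cvg_trans (H i j); apply: near_eq_cvg.
by apply: filterS E => t /= ->.
Qed.

Lemma mcvgD m n (f g : R -> 'M[R]_(m, n)) A B :
  mcvg f A -> mcvg g B -> mcvg (fun t => f t + g t) (A + B).
Proof.
move=> Hf Hg i j; rewrite mxE; under eq_cvg do rewrite mxE.
exact: cvgD (Hf i j) (Hg i j).
Qed.

Lemma mcvgZ m n (c : R -> R) (cl : R) (f : R -> 'M[R]_(m, n)) A :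
  c t @[t --> +oo] --> cl -> mcvg f A -> mcvg (fun t => c t *: f t) (cl *: A).
Proof.
move=> Hc Hf i j; rewrite mxE; under eq_cvg do rewrite mxE.
exact: cvgM Hc (Hf i j).
Qed.

Lemma mcvg_sum m n I (r : seq I) (P : pred I) (f : I -> R -> 'M[R]_(m, n)) L :
  (forall i, P i -> mcvg (f i) (L i)) ->
  mcvg (fun t => \sum_(i <- r | P i) f i t) (\sum_(i <- r | P i) L i).
Proof.
move=> H a b; rewrite summxE; under eq_cvg do rewrite summxE.
by apply: cvg_sumR => i Pi; apply: H.
Qed.

Lemma mcvg_mul m n p (f : R -> 'M[R]_(m, n)) (g : R -> 'M[R]_(n, p)) A B :
  mcvg f A -> mcvg g B -> mcvg (fun t => f t *m g t) (A *m B).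
Proof.
move=> Hf Hg i k; rewrite mxE; under eq_cvg do rewrite mxE.
by apply: cvg_sumR => j _; apply: cvgM.
Qed.

Lemma mcvg_unique m n (f : R -> 'M[R]_(m, n)) A B :
  mcvg f A -> mcvg f B -> A = B.
Proof.
move=> HA HB; apply/matrixP => i j.
exact: (cvg_unique _ (HA i j) (HB i j)).
Qed.

Lemma det_cvg n (f : R -> 'M[R]_n) A : mcvg f A ->
  \det (f t) @[t --> +oo] --> \det A.
Proof.
move=> H; rewrite /determinant; apply: cvg_sumR => s _.
apply: cvgM; first exact: cvg_cst.
by apply: cvg_prodR => i _; apply: H.
Qed.

Lemma mcvg_adj n (f : R -> 'M[R]_n) A : mcvg f A ->
  mcvg (fun t => \adj (f t)) (\adj A).
Proof.
move=> H i j; rewrite mxE; under eq_cvg do rewrite mxE.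
rewrite /cofactor; apply: cvgM; first exact: cvg_cst.
apply: det_cvg => a b; rewrite !mxE; under eq_cvg do rewrite !mxE.
exact: H.
Qed.

Lemma lim_rowspace k d (B : R -> 'M[R]_(k, d)) Binf (z : R -> 'rV[R]_d) zinf :
  \rank Binf = k -> mcvg B Binf -> mcvg z zinf ->
  (\forall t \near +oo, (z t <= B t)%MS) -> (zinf <= Binf)%MS.
Proof.
move=> rk HB Hz Hsub.
have /row_freeP [P HP] : row_free Binf by rewrite /row_free rk.
pose D t := B t *m P.
have HD : mcvg D 1%:M by rewrite -HP; exact: (mcvg_mul HB (mcvg_cst P)).
have E : \forall t \near +oo,
    \det (D t) *: z t = z t *m P *m \adj (D t) *m B t.
  apply: filterS Hsub => t /submxP [c ->].
  have -> : c *m B t *m P *m \adj (D t) *m B t = c *m (D t *m \adj (D t)) *m B t.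
    by rewrite /D !mulmxA.
  by rewrite mul_mx_adj mul_mx_scalar scalemxAl.
have H1 : mcvg (fun t => \det (D t) *: z t) zinf.
  by rewrite -[zinf]scale1r -(det1 R k); apply: mcvgZ (det_cvg HD) Hz.
have H2 : mcvg (fun t => z t *m P *m \adj (D t) *m B t) (zinf *m P *m \adj 1%:M *m Binf).
  apply: mcvg_mul HB; apply: mcvg_mul (mcvg_adj HD).
  exact: mcvg_mul Hz (mcvg_cst _).
have := mcvg_unique H1 (@mcvg_eq _ _ _ _ _ E H2); rewrite adj1 mulmx1 => ->.
exact: submxMl.
Qed.

Lemma cvg_sumR_seq (I : eqType) (r : seq I) (P : pred I) (f : I -> R -> R) (l : I -> R) :
  (forall i, i \in r -> P i -> f i t @[t --> +oo] --> l i) ->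
  (\sum_(i <- r | P i) f i t) @[t --> +oo] --> \sum_(i <- r | P i) l i.
Proof.
elim: r => [|i r IH] H.
  rewrite big_nil; under eq_cvg do rewrite big_nil; exact: cvg_cst.
rewrite big_cons; under eq_cvg do rewrite big_cons.
have IH' := IH (fun j jr => H j (@mem_behead _ (i :: r) j jr)).
case: ifP => Pi //; exact: cvgD (H i (mem_head _ _) Pi) IH'.
Qed.

Lemma mcvg_sum_seq m n (I : eqType) (r : seq I) (P : pred I) (f : I -> R -> 'M[R]_(m, n)) L :
  (forall i, i \in r -> P i -> mcvg (f i) (L i)) ->
  mcvg (fun t => \sum_(i <- r | P i) f i t) (\sum_(i <- r | P i) L i).
Proof.
move=> H a b; rewrite summxE; under eq_cvg do rewrite summxE.
by apply: cvg_sumR_seq => i ir Pi; apply: H.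
Qed.

Lemma cvg_near_eqR (f g : R -> R) (l : R) :
  (\forall t \near +oo, f t = g t) -> g t @[t --> +oo] --> l -> f t @[t --> +oo] --> l.
Proof.
move=> E H; apply: cvg_trans H; apply: near_eq_cvg.
by apply: filterS E => t /= ->.
Qed.

End An.
Arguments mcvg {R m n}.

Unset Implicit Arguments.
Close Scope classical_set_scope.

Section Alg.
Variables (R : realType) (d : nat) (br : 'rV[R]_d -> 'rV[R]_d -> 'rV[R]_d).
Hypothesis Hbr : is_lie_bracket br.
Notation V := 'rV[R]_d.

Definition brL (x : V) : {linear V -> V} :=
  HB.pack (br x) (GRing.isLinear.Build _ _ _ _ (br x) (let: And4 _ h _ _ := Hbr in h x)).
Definition brR (y : V) : {linear V -> V} :=
  HB.pack (br^~ y) (GRing.isLinear.Build _ _ _ _ (br^~ y) (let: And4 h _ _ _ := Hbr in h y)).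

Lemma brDr x u v : br x (u + v) = br x u + br x v.
Proof. exact: (linearD (brL x)). Qed.
Lemma brDl y u v : br (u + v) y = br u y + br v y.
Proof. exact: (linearD (brR y)). Qed.
Lemma brZr x a u : br x (a *: u) = a *: br x u.
Proof. exact: (linearZZ (brL x)). Qed.
Lemma brZl y a u : br (a *: u) y = a *: br u y.
Proof. exact: (linearZZ (brR y)). Qed.
Lemma brNl y u : br (- u) y = - br u y.
Proof. exact: (linearN (brR y)). Qed.
Lemma br0l y : br 0 y = 0.
Proof. exact: (linear0 (brR y)). Qed.
Lemma br0r y : br y 0 = 0.
Proof. exact: (linear0 (brL y)). Qed.
Lemma brsumr x I r (P : pred I) (F : I -> V) :
  br x (\sum_(i <- r | P i) F i) = \sum_(i <- r | P i) br x (F i).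
Proof. exact: (linear_sum (brL x)). Qed.
Lemma brsuml y I r (P : pred I) (F : I -> V) :
  br (\sum_(i <- r | P i) F i) y = \sum_(i <- r | P i) br (F i) y.
Proof. exact: (linear_sum (brR y)). Qed.

Lemma br_anti x y : br x y = - br y x.
Proof.
have [_ _ h0 _] := Hbr.
have := h0 (x + y); rewrite brDl !brDr !h0 add0r addr0 => /eqP.
by rewrite addr_eq0 => /eqP.
Qed.

Lemma br_jac x y z : br (br x y) z = br x (br y z) + br y (br z x).
Proof.
have [_ _ _ hj] := Hbr.
have := hj x y z => /eqP; rewrite addr_eq0 => /eqP ->.
exact: br_anti.
Qed.

Notation e i := (delta_mx 0 i : V).

Lemma br_brsp A x a : (a <= A)%MS -> (br x a <= brsp br A)%MS.
Proof.
case/submxP=> w ->; rewrite mulmx_sum_row (row_sum_delta x) brsuml.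
apply: summx_sub => i _; rewrite brZl brsumr scalemx_sub // summx_sub // => j _.
rewrite brZr scalemx_sub // (sumsmx_sup i) // (sumsmx_sup j) // genmxE //.
Qed.

Lemma brsp_mono A B : (A <= B)%MS -> (brsp br A <= brsp br B)%MS.
Proof.
move=> sAB; apply/sumsmx_subP => i _; apply/sumsmx_subP => j _.
by rewrite genmxE br_brsp // (submx_trans (row_sub j A)).
Qed.

Lemma brsp_lin A (M : 'M[R]_d) (C : 'M[R]_d) :
  (forall i j, br (e i) (row j A) *m M <= C)%MS -> (brsp br A *m M <= C)%MS.
Proof.
move=> H; rewrite (eqmxMr _ (eqmx_refl _)) sumsmxMr_gen.
apply/sumsmx_subP => i _; rewrite genmxE sumsmxMr_gen.
apply/sumsmx_subP => j _; rewrite genmxE.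
by rewrite (eqmxMr _ (genmxE _)).
Qed.


Lemma lcs_auxS k : lcs_aux br k.+1 = brsp br (lcs_aux br k).
Proof. by []. Qed.

Lemma lcs_aux_decr k : (lcs_aux br k.+1 <= lcs_aux br k)%MS.
Proof.
elim: k => [|k IH]; first exact: submx1.
by rewrite lcs_auxS [X in (_ <= X)%MS]lcs_auxS brsp_mono.
Qed.

Lemma lcs_aux_mono k n : (k <= n)%N -> (lcs_aux br n <= lcs_aux br k)%MS.
Proof.
move=> /subnKC <-; elim: (n - k)%N => [|m IH]; first by rewrite addn0.
by rewrite addnS (submx_trans (lcs_aux_decr _)).
Qed.

Lemma lcs_aux_stag k : (lcs_aux br k <= lcs_aux br k.+1)%MS ->
  forall n, (lcs_aux br k <= lcs_aux br (k + n))%MS.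
Proof.
move=> H.
have H1 : forall n, (lcs_aux br (k + n) <= lcs_aux br (k + n).+1)%MS.
  by elim=> [|n IH]; rewrite ?addn0 // addnS brsp_mono.
elim=> [|n IH]; first by rewrite addn0.
by rewrite addnS (submx_trans IH).
Qed.

Lemma lcs_aux_d : (exists s, lcs br s.+1 = 0) -> lcs_aux br d = 0.
Proof.
case=> s Hs; rewrite /lcs /= in Hs.
have key : forall k, lcs_aux br k = 0 \/ (\rank (lcs_aux br k) + k <= d)%N.
  elim=> [|k IH]; first by right; rewrite /= mxrank1 addn0.
  case: IH => [H0|Hr].
    by left; apply/eqP; rewrite -submx0 -H0 lcs_aux_decr.
  have [lt|gt|eqr] := ltngtP (\rank (lcs_aux br k.+1)) (\rank (lcs_aux br k)).
  - by right; rewrite addnS; apply: leq_trans Hr; rewrite ltn_add2r.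
  - by move: gt; rewrite ltnNge mxrankS // lcs_aux_decr.
  have := mxrank_leqif_eq (lcs_aux_decr k); rewrite eqr => -[_].
  rewrite eqxx => /esym /andP [_ sk].
  have := submx_trans (lcs_aux_stag k sk s) (lcs_aux_mono _ _ (leq_addl k s)).
  rewrite Hs submx0 => /eqP H0.
  by left; apply/eqP; rewrite -submx0 -H0 lcs_aux_decr.
case: (key d) => // Hr; apply/eqP; rewrite -mxrank_eq0; move: Hr.
by rewrite -[X in (_ <= X)%N]add0n leq_add2r leqn0.
Qed.


Lemma br_lcs_aux i j a b : (a <= lcs_aux br i)%MS -> (b <= lcs_aux br j)%MS ->
  (br a b <= lcs_aux br (i + j).+1)%MS.
Proof.
elim: i j a b => [|i IH] j a b ha hb; first by rewrite add0n br_brsp.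
have -> : br a b = a *m lin1_mx (brR b) by rewrite mul_rV_lin1.
rewrite lcs_auxS in ha.
have E1 : lcs_aux br (i.+1 + j).+1 = brsp br (lcs_aux br (i + j).+1) by rewrite addSn.
have E2 : lcs_aux br (i.+1 + j).+1 = lcs_aux br (i + j.+1).+1 by rewrite addSn addnS.
apply: submx_trans (submxMr _ ha) _; apply: brsp_lin => k l.
rewrite mul_rV_lin1.
have -> : brR b (br 'e_k (row l (lcs_aux br i))) = br (br 'e_k (row l (lcs_aux br i))) b by [].
rewrite br_jac addmx_sub //.
  by rewrite E1 br_brsp // IH // row_sub.
rewrite (br_anti b) -scaleN1r brZr scalemx_sub //.
by rewrite E2 IH ?row_sub // br_brsp.
Qed.

Lemma br_lcs p q a b : (0 < p)%N -> (0 < q)%N ->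
  (a <= lcs br p)%MS -> (b <= lcs br q)%MS -> (br a b <= lcs br (p + q))%MS.
Proof.
case: p => // p; case: q => // q _ _ ha hb.
by rewrite /lcs addSn /= addnS; apply: br_lcs_aux.
Qed.


Lemma sums_subP_seq m (r : seq nat) (P : pred nat) (A : nat -> 'M[R]_d) (B : 'M[R]_(m, d)) :
  (forall i, i \in r -> P i -> (A i <= B)%MS) -> (\sum_(i <- r | P i) A i <= B)%MS.
Proof.
move=> H; rewrite big_seq_cond; elim/big_rec: _ => [|i Ai /andP[ir Pi] sAB].
  exact: sub0mx.
by rewrite addsmx_sub H.
Qed.

Lemma sums_sup_seq m (r : seq nat) (P : pred nat) i0 (A : 'M[R]_(m, d)) (B : nat -> 'M[R]_d) :
  i0 \in r -> P i0 -> (A <= B i0)%MS -> (A <= \sum_(i <- r | P i) B i)%MS.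
Proof.
move=> ir Pi sAB; rewrite (big_rem i0) //= Pi.
exact: submx_trans sAB (addsmxSl _ _).
Qed.

Variable mg : nat -> 'M[R]_d.
Hypothesis Hnil : nilpotent_bracket br.
Hypothesis Hgr : is_grading br mg.

Lemma lcs_d1 : lcs br d.+1 = 0.
Proof. exact: lcs_aux_d. Qed.

Lemma lcs1 : lcs br 1 = 1%:M.
Proof. by []. Qed.

Lemma mg_lcs p : (0 < p)%N -> (mg p <= lcs br p)%MS.
Proof.
move=> hp; have [/andP[_ H] _] := Hgr p hp.
exact: submx_trans (addsmxSl _ _) H.
Qed.

Lemma lcs_sub_sum p : (0 < p)%N ->
  (lcs br p <= \sum_(p <= s < d.+1) mg s)%MS.
Proof.
move=> hp; case: (leqP p d.+1) => hpd; last first.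
  have -> : lcs br p = 0.
    apply/eqP; rewrite -submx0 -lcs_d1 /lcs lcs_aux_mono //.
    by case: (p) hp hpd => [//|q] _ /=; rewrite ltnS => /ltnW.
  exact: sub0mx.
have : (p + (d.+1 - p) = d.+1)%N by rewrite subnKC.
move: (d.+1 - p)%N => n; clear hpd; elim: n p hp => [|n IH] p hp.
  by rewrite addn0 => ->; rewrite lcs_d1 sub0mx.
rewrite addnS -addSn => /[dup] hpn /(IH p.+1 isT) IH'.
have [/andP[H _] _] := Hgr p hp.
rewrite (big_ltn); last by rewrite -hpn addSn ltnS leq_addr.
apply: submx_trans H _; exact: addsmxS.
Qed.


Lemma rank_lcs p : (0 < p)%N -> (p <= d.+1)%N ->
  \rank (lcs br p) = (\sum_(p <= s < d.+1) \rank (mg s))%N.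
Proof.
move=> hp hpd.
have : (p + (d.+1 - p) = d.+1)%N by rewrite subnKC.
move: (d.+1 - p)%N => n; clear hpd; elim: n p hp => [|n IH] p hp.
  by rewrite addn0 => ->; rewrite lcs_d1 mxrank0 big_geq.
rewrite addnS -addSn => /[dup] hpn /(IH p.+1 isT) IH'.
have [/eqmxP E cap] := Hgr p hp.
rewrite (big_ltn); last by rewrite -hpn addSn ltnS leq_addr.
by rewrite E mxrank_disjoint_sum // IH'.
Qed.

Lemma ordsum_nat (F : nat -> 'M[R]_d) :
  (\sum_(1 <= s < d.+1) F s)%MS = (\sum_(i < d.+1 | (0 < i)%N) F i)%MS.
Proof. by rewrite big_geq_mkord; apply: eq_bigl => i. Qed.

Lemma one_sub_sum : (1%:M <= \sum_(i < d.+1 | (0 < i)%N) <<mg i>>)%MS.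
Proof.
rewrite -lcs1; apply: submx_trans (lcs_sub_sum 1 isT) _.
rewrite ordsum_nat; apply: sumsmxS => i _; by rewrite genmxE.
Qed.

Lemma mgdirect : mxdirect (\sum_(i < d.+1 | (0 < i)%N) <<mg i>>)%MS.
Proof.
rewrite mxdirectEgeq /=.
have -> : (\sum_(i < d.+1 | (0 < i)%N) \rank <<mg i>>)%N = d.
  transitivity (\rank (1%:M : 'M[R]_d)); last exact: mxrank1.
  rewrite -lcs1 rank_lcs // big_geq_mkord.
  by apply: eq_big => // i _; rewrite genmxE.
by rewrite -[X in (X <= _)%N](mxrank1 R d) mxrankS // one_sub_sum.
Qed.

Notation Oth p := (\sum_(1 <= q < d.+1 | q != p) <<mg q>>)%MS.
Notation PG p := (proj_grad mg p).

Lemma PG_dir p : (0 < p <= d)%N -> (<<mg p>> :&: Oth p)%MS = 0.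
Proof.
case/andP=> p0 pd; have pd' : (p < d.+1)%N by [].
have /mxdirect_sumsP H := mgdirect.
have := H (Ordinal pd') p0; rewrite big_geq_mkord /=.
move=> E; rewrite -[X in _ = X]E; congr capmx; apply: eq_bigl => j; by rewrite andbC -val_eqE.
Qed.

Lemma PG_sub (x : 'rV[R]_d) p : (x *m PG p <= mg p)%MS.
Proof.
rewrite /proj_grad; case: ifP => _; last by rewrite mulmx0 sub0mx.
by apply: submx_trans (proj_mx_sub _ _ _) _; rewrite genmxE.
Qed.

Lemma PG_id (v : 'rV[R]_d) p : (0 < p <= d)%N -> (v <= mg p)%MS -> v *m PG p = v.
Proof.
move=> hp hv; rewrite /proj_grad hp proj_mx_id ?PG_dir ?genmxE //.
Qed.

Lemma PG_0 (v : 'rV[R]_d) p : (0 < p <= d)%N -> (v <= Oth p)%MS -> v *m PG p = 0.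
Proof.
move=> hp hv; rewrite /proj_grad hp proj_mx_0 ?PG_dir //.
Qed.

Lemma PG_out p : ~~ (0 < p <= d)%N -> PG p = 0.
Proof. by rewrite /proj_grad => /negPf ->. Qed.

Lemma PG_other (v : 'rV[R]_d) p q : (0 < q <= d)%N -> q != p -> (v <= mg q)%MS -> v *m PG p = 0.
Proof.
move=> hq qp hv; case hp: (0 < p <= d)%N; last by rewrite PG_out ?hp ?mulmx0.
apply: PG_0 => //; apply: (@sums_sup_seq _ _ _ q) => //; last by rewrite genmxE.
by rewrite mem_index_iota; exact: hq.
Qed.

Lemma PG_high (v : 'rV[R]_d) r p0 : (r < p0)%N -> (v <= \sum_(p0 <= s < d.+1) mg s)%MS ->
  v *m PG r = 0.
Proof.
move=> rp hv; case hr: (0 < r <= d)%N; last by rewrite PG_out ?hr ?mulmx0.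
apply: PG_0 => //; apply: submx_trans hv _; apply: sums_subP_seq => s.
rewrite mem_index_iota => /andP[ps sd] _.
apply: (@sums_sup_seq _ _ _ s); last by rewrite genmxE.
  by rewrite mem_index_iota sd (leq_trans _ ps) // (leq_ltn_trans _ rp).
by rewrite neq_ltn (leq_trans rp ps) orbT.
Qed.

Lemma sum_PG_vec (x : 'rV[R]_d) : \sum_(1 <= p < d.+1) x *m PG p = x.
Proof.
have : (x <= \sum_(i < d.+1 | (0 < i)%N) <<mg i>>)%MS.
  exact: submx_trans (submx1 x) one_sub_sum.
case/sub_sums_genmxP => u Hx.
rewrite big_geq_mkord (eq_bigl (fun i : 'I_d.+1 => (0 < i)%N)) //.
rewrite [X in _ = X]Hx; apply: eq_bigr => p p0.
rewrite Hx mulmx_suml (bigD1 p) //= big1 ?addr0.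
  by rewrite PG_id ?submxMl // p0 -ltnS ltn_ord.
move=> i /andP[i0 ip]; apply: (@PG_other _ _ i); rewrite ?submxMl //.
by rewrite i0 -ltnS ltn_ord.
Qed.

Lemma mx_rows (A B : 'M[R]_d) : (forall x : 'rV[R]_d, x *m A = x *m B) -> A = B.
Proof. by move=> H; apply/row_matrixP => i; rewrite !rowE H. Qed.

Lemma sum_PG : \sum_(1 <= p < d.+1) PG p = 1%:M.
Proof. by apply: mx_rows => x; rewrite mulmx_sumr sum_PG_vec mulmx1. Qed.

Lemma PG_PG_vec (x : 'rV[R]_d) p q :
  x *m PG p *m PG q = if p == q then x *m PG p else 0.
Proof.
case hp: (0 < p <= d)%N; last by rewrite PG_out ?hp // mulmx0 mul0mx; case: (p == q).
case: eqP => [<-|/eqP pq]; first by rewrite PG_id ?PG_sub.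
exact: (@PG_other _ _ p) (PG_sub _ _).
Qed.

Lemma dil_vec (x : 'rV[R]_d) t s :
  x *m dilation mg t *m dilation mg s = x *m dilation mg (t * s).
Proof.
rewrite /dilation (mulmx_sumr x) mulmx_suml (mulmx_sumr x); apply: eq_big_seq => p.
rewrite mem_index_iota => hp.
rewrite -scalemxAr -scalemxAl mulmx_sumr.
rewrite (bigD1_seq p) ?mem_index_iota ?iota_uniq //=.
rewrite big1_seq ?addr0.
  by rewrite -!scalemxAr PG_PG_vec eqxx scalerA exprMn.
move=> q /andP[qp _]; rewrite -scalemxAr PG_PG_vec eq_sym (negPf qp) scaler0 //.
Qed.


Lemma br_expand u v : br u v = \sum_(i < d) \sum_(k < d) (u 0 i * v 0 k) *: br (e i) (e k).
Proof.
rewrite {1}(row_sum_delta u) brsuml; apply: eq_bigr => i _.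
rewrite brZl {1}(row_sum_delta v) brsumr scaler_sumr; apply: eq_bigr => k _.
by rewrite brZr scalerA.
Qed.

Lemma mcvg_br (f g : R -> 'rV[R]_d) x y : mcvg f x -> mcvg g y ->
  mcvg (fun t => br (f t) (g t)) (br x y).
Proof.
move=> Hf Hg; rewrite br_expand.
apply: (@mcvg_eq _ _ _ _ (fun t => \sum_(i < d) \sum_(k < d) (f t 0 i * g t 0 k) *: br (e i) (e k))).
  by apply: filterS (near_pos R) => t _; rewrite br_expand.
apply: mcvg_sum => i _; apply: mcvg_sum => k _.
apply: mcvgZ (mcvg_cst _); exact: cvgM (Hf 0 i) (Hg 0 k).
Qed.

Lemma br_PG (x y : 'rV[R]_d) p q r : (0 < p)%N -> (0 < q)%N -> (r < p + q)%N ->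
  br (x *m PG p) (y *m PG q) *m PG r = 0.
Proof.
move=> p0 q0 rpq; apply: (PG_high _ _ _ rpq).
have hpq : (0 < p + q)%N by rewrite addn_gt0 p0.
apply: (submx_trans _ (lcs_sub_sum _ hpq)).
by apply: br_lcs => //; [apply: submx_trans (PG_sub _ _) (mg_lcs _ p0) |
  apply: submx_trans (PG_sub _ _) (mg_lcs _ q0)].
Qed.

Lemma dil1 : dilation mg 1 = 1%:M.
Proof. rewrite /dilation -sum_PG; apply: eq_bigr => p _; by rewrite expr1n scale1r. Qed.

Lemma dilM t s : dilation mg t *m dilation mg s = dilation mg (t * s).
Proof. by apply: mx_rows => x; rewrite mulmxA dil_vec. Qed.

Lemma brt_exp (u v : 'rV[R]_d) (t : R) :
  br (u *m dilation mg t) (v *m dilation mg t) *m dilation mg t^-1 =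
  \sum_(1 <= p < d.+1) \sum_(1 <= q < d.+1) \sum_(1 <= r < d.+1)
     (t ^+ p * t ^+ q * t^-1 ^+ r) *: (br (u *m PG p) (v *m PG q) *m PG r).
Proof.
have Hw : forall w : 'rV[R]_d, w *m dilation mg t = \sum_(1 <= p < d.+1) t ^+ p *: (w *m PG p).
  by move=> w; rewrite /dilation mulmx_sumr; apply: eq_bigr => p _; rewrite scalemxAr.
rewrite Hw brsuml mulmx_suml; apply: eq_bigr => p _.
rewrite brZl -scalemxAl Hw brsumr mulmx_suml scaler_sumr; apply: eq_bigr => q _.
rewrite brZr -scalemxAl /dilation mulmx_sumr !scaler_sumr; apply: eq_bigr => r _.
by rewrite -scalemxAr !scalerA.
Qed.

Lemma graded_exp (x y : 'rV[R]_d) :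
  graded_bracket br mg x y =
  \sum_(1 <= p < d.+1) \sum_(1 <= q < d.+1) \sum_(1 <= r < d.+1)
     (r == p + q)%:R *: (br (x *m PG p) (y *m PG q) *m PG r).
Proof.
rewrite /graded_bracket; apply: eq_bigr => p _; apply: eq_bigr => q _.
case H: ((p + q)%N \in index_iota 1 d.+1).
  rewrite (bigD1_seq (p + q)%N) ?iota_uniq //= eqxx scale1r big1_seq ?addr0 //.
  by move=> r /andP[/negPf -> _]; rewrite scale0r.
rewrite big1_seq.
  rewrite [PG (p + q)]PG_out ?mulmx0 //; move: H; rewrite mem_index_iota => /negbT; apply.
move=> r /andP[_ hr]; case: eqP => [E|_]; last by rewrite scale0r.
by move: hr; rewrite E H.
Qed.

Lemma brt_cvg (xt yt : R -> 'rV[R]_d) x y : mcvg xt x -> mcvg yt y ->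
  mcvg (fun t => br (xt t *m dilation mg t) (yt t *m dilation mg t) *m dilation mg t^-1)
       (graded_bracket br mg x y).
Proof.
move=> Hx Hy; rewrite graded_exp.
apply: (@mcvg_eq _ _ _ _ (fun t => \sum_(1 <= p < d.+1) \sum_(1 <= q < d.+1) \sum_(1 <= r < d.+1)
     (t ^+ p * t ^+ q * t^-1 ^+ r) *: (br (xt t *m PG p) (yt t *m PG q) *m PG r))).
  by apply: filterS (near_pos R) => t _; rewrite brt_exp.
apply: mcvg_sum_seq => p; rewrite mem_index_iota => /andP[p0 _] _.
apply: mcvg_sum_seq => q; rewrite mem_index_iota => /andP[q0 _] _.
apply: mcvg_sum_seq => r _ _.
have Hf : mcvg (fun t => br (xt t *m PG p) (yt t *m PG q) *m PG r)
               (br (x *m PG p) (y *m PG q) *m PG r).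
  apply: mcvg_mul (mcvg_cst _); apply: mcvg_br; exact: mcvg_mul (mcvg_cst _).
case: (ltnP r (p + q)) => hr.
  rewrite br_PG // scaler0.
  apply: (@mcvg_eq _ _ _ _ (fun=> 0)); last exact: mcvg_cst.
  by apply: filterS (near_pos R) => t _; rewrite br_PG // scaler0.
apply: mcvgZ Hf.
apply: (@cvg_near_eqR _ _ (fun t => t^-1 ^+ (r - (p + q)))).
  apply: filterS (near_pos R) => t t0.
  move: (r - (p + q))%N (subnKC hr) => k <-.
  by rewrite -exprD (exprD t^-1) mulrA -exprMn mulfV ?gt_eqF // expr1n mul1r.
have -> : (r == p + q)%:R = (0 : R) ^+ (r - (p + q)) by rewrite expr0n subn_eq0 eqn_leq hr andbT.
apply: cvg_exprR; exact: inv_cvg0.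
Qed.

Variables (m minf : 'M[R]_d).

Lemma main_sub : is_subalgebra br m ->
  grass_lim (\rank m) (fun t => (m *m dilation mg t^-1)%R) minf ->
  is_subalgebra (graded_bracket br mg) minf.
Proof.
move=> Hsub [B [Binf [rkB /andP[sBm smB] nB cB]]] x y hx hy.
case/submxP: (submx_trans hx smB) => a ->.
case/submxP: (submx_trans hy smB) => b ->.
apply: submx_trans sBm.
have L1 := brt_cvg _ _ _ _ (mcvg_mul (mcvg_cst a) cB) (mcvg_mul (mcvg_cst b) cB).
have L2 := lim_rowspace rkB cB L1.
apply: L2; apply: (filterS2 _ _ (near_pos R) nB) => t t0 /andP[sBW sWB].
have hW : forall c : 'rV[R]_(\rank m), (c *m B t *m dilation mg t <= m)%MS.
  move=> c; apply: submx_trans (submxMr _ (submx_trans (submxMl c _) sBW)) _.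
  by rewrite -mulmxA dilM mulVf ?gt_eqF // dil1 mulmx1.
apply: submx_trans (submxMr _ (Hsub _ _ (hW a) (hW b))) _.
exact: sWB.
Qed.

End Alg.

Theorem lemma2p16 (R : realType) (d : nat) (br : 'rV[R]_d -> 'rV[R]_d -> 'rV[R]_d)
  (mg : nat -> 'M[R]_d) (m minf : 'M[R]_d) :
  is_lie_bracket br -> nilpotent_bracket br -> is_grading br mg ->
  is_subalgebra br m ->
  grass_lim (\rank m) (fun t => (m *m dilation mg t^-1)%R) minf ->
  is_subalgebra (graded_bracket br mg) minf.
Proof. move=> Hbr Hnil Hgr; exact: main_sub. Qed.
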